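(* Consider an instance of the Steiner Team Orienteering Problem and the formulation $\mathcal{F}_2$ as described in the context, and let $\mathcal{K}$ be the set of conflicting vertex pairs. For every feasible solution $(x,y,f,\varphi)$ of $\mathcal{F}_2$, every pair $\langle i,j\rangle\in\mathcal{K}$ and every $V\subseteq N\setminus\{s\}$ with $\{i,j\}\subseteq V$, we have $\sum_{e\in\delta^-(V)}x_e\ge y_i+y_j$.
   Context: An instance of the Steiner Team Orienteering Problem (STOP) consists of: a digraph $G=(N,A)$; an origin $s\in N$ and a destination $t\in N$ with $s\neq t$; disjoint sets $S,P\subseteq N\setminus\{s,t\}$ (mandatory and profitable vertices) with $N=S\cup P\cup\{s,t\}$; rewards $p_i\in\mathbb{Z}^+$ for $i\in P$; traverse times $d_{ij}\in\mathbb{R}^+$ for $(i,j)\in A$; a number $m$ of vehicles and a time limit $T$. For $i\in N$ let $\delta^+(i)=\{j\in N:(i,j)\in A\}$ and $\delta^-(i)=\{j\in N:(j,i)\in A\}$; for $V\subseteq N$ let $\delta^+(V)=\{(i,j)\in A: i\in V, j\in N\setminus V\}$ and $\delta^-(V)=\{(i,j)\in A: i\in N\setminus V, j\in V\}$. For $i,j\in N$, $R_{ij}$ denotes the minimum of $\sum_{a\in A_p}d_a$ over all paths $p$ from $i$ to $j$ in $G$ (with arc set $A_p$), and $R_{ii}=0$. $\mathcal{K}$ is the set of pairs $\langle i,j\rangle$ with $i,j\in N\setminus\{s,t\}$ such that every route from $s$ to $t$ in $G$ visiting both $i$ and $j$ (in any order) has total traverse time (sum of $d$ over its arcs) exceeding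 $T$. $\mathcal{F}_2$: maximize $\sum_{i\in P}p_iy_i$ over $x\in\{0,1\}^A$, $y\in\{0,1\}^N$, $f\in\mathbb{R}^A$, $\varphi\in\mathbb{R}$ subject to: $y_i=1$ for all $i\in S\cup\{s,t\}$; $\sum_{j\in\delta^+(i)}x_{ij}=y_i$ for all $i\in S\cup P$; $\sum_{j\in\delta^+(s)}x_{sj}=\sum_{i\in\delta^-(t)}x_{it}=m-\varphi$; $\sum_{i\in\delta^-(s)}x_{is}=\sum_{j\in\delta^+(t)}x_{tj}=0$; $\sum_{j\in\delta^+(i)}x_{ij}-\sum_{j\in\delta^-(i)}x_{ji}=0$ for all $i\in S\cup P$; $f_{sj}=(T-d_{sj})x_{sj}$ for all $j\in\delta^+(s)$; $\sum_{j\in\delta^-(i)}f_{ji}-\sum_{j\in\delta^+(i)}f_{ij}=\sum_{j\in\delta^+(i)}d_{ij}x_{ij}$ for all $i\in S\cup P$; $f_{ij}\le(T-R_{si}-d_{ij})x_{ij}$ for all $(i,j)\in A$ with $i\neq s$; $f_{ij}\ge R_{jt}x_{ij}$ for all $(i,j)\in A$; $f\ge0$; $0\le\varphi\le m$. *)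

(* Defs.v *)
From HB Require Import structures.
From mathcomp Require Import all_boot all_order all_algebra.
Set Implicit Arguments. Unset Strict Implicit. Unset Printing Implicit Defensive.
Import Order.TTheory GRing.Theory Num.Theory.
Local Open Scope ring_scope.

Section STOP.
Variables (R : realFieldType) (N : finType).
Variable (A : rel N).
Variable (d : N -> N -> R).    (* traverse times, meaningful on arcs *)

Fixpoint plen (i : N) (p : seq N) : R :=
  if p is k :: q then d i k + plen k q else 0.

Definition is_path (i j : N) (p : seq N) : bool :=
  [&& path A i p, last i p == j & uniq (i :: p)].

(* Rd i j is the shortest-path distance R_ij (None = +infinity, i.e. no path). *)
Definition shortest_dist (Rd : N -> N -> option R) : Prop :=
  forall i j, match Rd i j with
  | Some r => (exists2 p, is_path i j p & plen i p = r) /\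
              (forall p, is_path i j p -> r <= plen i p)
  | None => forall p, ~~ is_path i j p
  end.

Definition conflicting (s t : N) (T : R) (i j : N) : Prop :=
  [/\ i != s, i != t, j != s, j != t &
   forall p, is_path s t p -> i \in s :: p -> j \in s :: p -> T < plen s p].

Record F2_feasible (S P : {set N}) (s t : N) (m : nat) (T : R)
  (Rd : N -> N -> option R)
  (x : N -> N -> R) (y : N -> R) (f : N -> N -> R) (phi : R) : Prop := {
  F2_x01 : forall i j, A i j -> x i j = 0 \/ x i j = 1;
  F2_y01 : forall i, y i = 0 \/ y i = 1;
  F2_ymand : forall i, (i \in S) || (i == s) || (i == t) -> y i = 1;
  F2_deg : forall i, i \in S :|: P -> \sum_(j | A i j) x i j = y i;
  F2_out_s : \sum_(j | A s j) x s j = m%:R - phi;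
  F2_in_t : \sum_(i | A i t) x i t = m%:R - phi;
  F2_in_s : \sum_(i | A i s) x i s = 0;
  F2_out_t : \sum_(j | A t j) x t j = 0;
  F2_cons : forall i, i \in S :|: P ->
     \sum_(j | A i j) x i j - \sum_(j | A j i) x j i = 0;
  F2_fs : forall j, A s j -> f s j = (T - d s j) * x s j;
  F2_fcons : forall i, i \in S :|: P ->
     \sum_(j | A j i) f j i - \sum_(j | A i j) f i j
       = \sum_(j | A i j) d i j * x i j;
  (* f_ij <= (T - R_si - d_ij) x_ij ; if R_si = +oo, use (-oo) * 0 = 0 *)
  F2_fub : forall i j, A i j -> i != s ->
     match Rd s i return Prop with
     | Some r => f i j <= (T - r - d i j) * x i j
     | None => x i j = 0 /\ f i j <= 0
     end;
  (* f_ij >= R_jt x_ij ; if R_jt = +oo, use (+oo) * 0 = 0 *)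
  F2_flb : forall i j, A i j ->
     match Rd j t return Prop with
     | Some r => r * x i j <= f i j
     | None => x i j = 0
     end;
  F2_fnn : forall i j, A i j -> 0 <= f i j;
  F2_phi : 0 <= phi <= m%:R }.

Definition in_cut (V : {set N}) (x : N -> N -> R) : R :=
  \sum_(e : N * N | [&& A e.1 e.2, e.1 \notin V & e.2 \in V]) x e.1 e.2.

End STOP.

(* Main.v *)
Require Import Defs.
From HB Require Import structures.
From mathcomp Require Import all_boot all_order all_algebra.
From mathcomp Require Import lra.
Import Order.TTheory GRing.Theory Num.Theory.
Local Open Scope ring_scope.

Lemma exists_max_aux (R: realDomainType) (T: finType) (C : pred T) (F : T -> R) w :
  C w -> exists u, C u /\ forall v, C v -> F v <= F u.
Proof.
move=> Cw.
case: (@Order.TotalTheory.arg_maxP _ R T w C F Cw) => u Cu Hu.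
by exists u.
Qed.

Lemma sum_one_rest (R: realDomainType) (I: finType) (Pr: pred I) (F : I -> R) v :
  (forall k, Pr k -> 0 <= F k) -> Pr v -> F v = 1 ->
  (\sum_(k | Pr k) F k = 0 -> False) /\
  (\sum_(k | Pr k) F k = 1 -> forall k, Pr k -> k != v -> F k = 0).
Proof.
move=> Fnn Pv Fv.
rewrite (bigD1 v) //= Fv.
have rnn : 0 <= \sum_(k | Pr k && (k != v)) F k.
  by apply: sumr_ge0 => k /andP[+ _]; apply: Fnn.
split; first by move=> h; lra.
move=> h k Pk kv.
have h0 : \sum_(k | Pr k && (k != v)) F k = 0 by lra.
apply: (psumr_eq0P _ h0); last by rewrite Pk kv.
by move=> k' /andP[+ _]; apply: Fnn.
Qed.

Theorem proposition2 (R : realFieldType) (N : finType) (A : rel N)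
  (d : N -> N -> R) (S P : {set N}) (s t : N) (m : nat) (T : R)
  (Rd : N -> N -> option R)
  (hst : s != t)
  (hSP : [disjoint S & P])
  (hS : s \notin S :|: P) (hT : t \notin S :|: P)
  (hN : forall v : N, (v \in S :|: P) || (v == s) || (v == t))
  (hd : forall i j, A i j -> 0 < d i j)
  (hRd : shortest_dist A d Rd)
  (x : N -> N -> R) (y : N -> R) (f : N -> N -> R) (phi : R)
  (hfeas : F2_feasible A d S P s t m T Rd x y f phi) :
  forall i j, conflicting A d s t T i j ->
  forall V : {set N}, s \notin V -> i \in V -> j \in V ->
    y i + y j <= in_cut A V x.
Proof.
case: hfeas => x01 y01 ymand deg out_s in_t in_s out_t cons fs fcons fub flb fnn phib.
set SP := S :|: P.
pose E := [rel u v | A u v && (x u v == 1)].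
have xnn : forall a b, A a b -> 0 <= x a b.
  by move=> a b /x01 [] ->; rewrite ?lexx ?ler01.
have f0 : forall a b, A a b -> x a b = 0 -> f a b = 0.
  move=> a b ab xab; apply/eqP; rewrite eq_le fnn // andbT.
  case: (eqVneq a s) => [eas|nas].
    by subst a; rewrite fs // xab mulr0.
  move: (fub a b ab nas); case: (Rd s a) => [r|]; first by rewrite xab mulr0.
  by case.
have Et : forall u v, E u v -> u != t.
  move=> u v /andP[uv /eqP xuv]; apply/eqP => ut; subst u.
  have := psumr_eq0P (fun k => xnn t k) out_t uv; rewrite xuv => h.
  by move: (@oner_neq0 R); rewrite h eqxx.
have Es : forall u v, E u v -> v != s.
  move=> u v /andP[uv /eqP xuv]; apply/eqP => vs; subst v.
  have := psumr_eq0P (fun k hk => xnn k s hk) in_s uv; rewrite xuv => h.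
  by move: (@oner_neq0 R); rewrite h eqxx.
have Eout : forall u v, E u v -> u != s ->
    [/\ u \in SP, y u = 1 & forall w, A u w -> w != v -> x u w = 0].
  move=> u v Euv nus; have nut := Et _ _ Euv.
  move: Euv => /andP[uv /eqP xuv].
  have uSP : u \in SP by move: (hN u); rewrite (negbTE nus) (negbTE nut) !orbF.
  have [h0 h1] := @sum_one_rest R N (A u) (x u) v (xnn u) uv xuv.
  have dg := deg u uSP.
  case: (y01 u) => yu; first by exfalso; apply: h0; rewrite dg.
  by split => //; apply: h1; rewrite dg.
have Ein : forall u v, E u v -> v != t ->
    [/\ v \in SP, y v = 1 & forall w, A w v -> w != u -> x w v = 0].
  move=> u v Euv nvt; have nvs := Es _ _ Euv.
  move: Euv => /andP[uv /eqP xuv].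
  have vSP : v \in SP by move: (hN v); rewrite (negbTE nvs) (negbTE nvt) !orbF.
  have [h0 h1] := @sum_one_rest R N (fun k => A k v) (fun k => x k v) u
     (fun k hk => xnn k v hk) uv xuv.
  have dg := deg v vSP.
  have cv := cons v vSP.
  have dg' : \sum_(j | A j v) x j v = y v by rewrite -dg; lra.
  case: (y01 v) => yv; first by exfalso; apply: h0; rewrite dg'.
  by split => //; apply: h1; rewrite dg'.
have Epred : forall w, w \in SP -> y w = 1 -> exists u, E u w.
  move=> w wSP yw.
  case: (boolP [exists u, E u w]) => [/existsP[u hu]|/existsPn hn]; first by exists u.
  exfalso.
  have : \sum_(j | A j w) x j w = 0.
    apply: big1 => j jw; case: (x01 j w jw) => // xj.
    by move: (hn j); rewrite /= jw xj eqxx.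
  have cv := cons w wSP; have dg := deg w wSP.
  move=> h; lra.
have Esucc : forall w, w \in SP -> y w = 1 -> exists v, E w v.
  move=> w wSP yw.
  case: (boolP [exists u, E w u]) => [/existsP[u hu]|/existsPn hn]; first by exists u.
  exfalso.
  have : \sum_(j | A w j) x w j = 0.
    apply: big1 => j jw; case: (x01 w j jw) => // xj.
    by move: (hn j); rewrite /= jw xj eqxx.
  have dg := deg w wSP.
  move=> h; lra.
pose g v := \sum_(j | A j v) f j v.
pose H v := if v == s then T else if v == t then -1 else g v.
have Hf : forall u v, E u v -> f u v = H u - d u v.
  move=> u v Euv; have nut := Et _ _ Euv.
  case: (eqVneq u s) => [eus|nus].
    subst u; move: Euv => /andP[uv /eqP xuv].
    by rewrite /H eqxx fs // xuv mulr1.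
  have [uSP yu oth] := Eout u v Euv nus.
  move: Euv => /andP[uv /eqP xuv].
  have e1 : \sum_(j | A u j) f u j = f u v.
    rewrite (bigD1 v) //= big1 ?addr0 // => k /andP[uk kv].
    by rewrite f0 // oth.
  have e2 : \sum_(j | A u j) d u j * x u j = d u v.
    rewrite (bigD1 v) //= big1 ?addr0 ?xuv ?mulr1 // => k /andP[uk kv].
    by rewrite oth // mulr0.
  have := fcons u uSP; rewrite e1 e2.
  rewrite /H (negbTE nus) (negbTE nut) /g.
  move=> h; lra.
have Hin : forall u v, E u v -> v != t -> H v = f u v.
  move=> u v Euv nvt; have nvs := Es _ _ Euv.
  have [vSP yv oth] := Ein u v Euv nvt.
  move: Euv => /andP[uv /eqP xuv].
  rewrite /H (negbTE nvs) (negbTE nvt) /g (bigD1 u) //= big1 ?addr0 //.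
  by move=> k /andP[kv ku]; rewrite f0 // oth.
have Hdec : forall u v, E u v -> H v < H u.
  move=> u v Euv; have hf := Hf u v Euv.
  have uv : A u v by case/andP: Euv.
  have dp := hd u v uv; have fn := fnn u v uv.
  case: (eqVneq v t) => [evt|nvt].
    subst v; rewrite [H t]/H eq_sym (negbTE hst) eqxx; lra.
  have := Hin u v Euv nvt; lra.
have plenle : forall p u, path E u p -> last u p = t -> u != t -> plen d u p <= H u.
  elim=> [|v q IH] u /=.
    by move=> _ ut; rewrite ut eqxx.
  case/andP => Euv pq lq nut.
  have hf := Hf u v Euv.
  have uv : A u v by case/andP: Euv.
  have fn := fnn u v uv.
  case: (eqVneq v t) => [evt|nvt].
    subst v; case: q pq lq IH => [|w q'] /=.
      by move=> _ _ _; rewrite addr0; lra.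
    by case/andP => Etw _; have := Et _ _ Etw; rewrite eqxx.
  have := IH v pq lq nvt; have := Hin u v Euv nvt; lra.
have uniqE : forall p u, path E u p -> uniq (u :: p).
  move=> p u pp; apply: (@sorted_uniq _ [rel a b | H b < H a]).
  - by move=> b a c /= h1 h2; exact: lt_trans h2 h1.
  - by move=> a /=; rewrite ltxx.
  - by apply: (sub_path _ pp) => a b /Hdec.
have func : forall u v v', u != s -> E u v -> E u v' -> v = v'.
  move=> u v v' nus Euv Euv'.
  have [_ _ oth] := Eout u v Euv nus.
  move: Euv' => /andP[uv' /eqP xv'].
  apply/eqP; apply: contraT => nv.
  have := oth v' uv'; rewrite eq_sym nv xv' => /(_ isT) h.
  by move: (@oner_neq0 R); rewrite h eqxx.
have order : forall p b a c, b != s -> path E b p -> a = last b p ->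
    connect E b c -> connect E a c || connect E c a.
  elim=> [|v p IH] b a c nbs /=.
    by move=> _ -> ->.
  move=> /andP[Ebv pp] ea /connectP[q qp ec].
  case: q qp ec => [|w q] /=.
    move=> _ ->; apply/orP; right; apply/connectP; exists (v :: p) => //=.
    by rewrite Ebv pp.
  move=> /andP[Ebw qp] ec.
  have wv := func b v w nbs Ebv Ebw; subst w.
  apply: (IH v a c (Es _ _ Ebv) pp ea).
  by apply/connectP; exists q.
have maxpred : forall (Q : pred N) w, Q w ->
    exists u, [/\ Q u, connect E u w & forall a, E a u -> ~~ Q a].
  move=> Q w Qw.
  have hC : [pred u | Q u && connect E u w] w by rewrite /= Qw connect0.
  have [u [/andP[Qu cuw] mx]] := @exists_max_aux R N [pred u | Q u && connect E u w] H w hC.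
  exists u; split => // a Eau; apply/negP => Qa.
  have := mx a; rewrite /= Qa (connect_trans (@connect1 N E a u Eau) cuw) => /(_ isT) hle.
  have := Hdec a u Eau; lra.
have conn_active : forall u w, connect E u w -> w \in SP -> y w = 1 ->
    u = s \/ (u \in SP /\ y u = 1).
  move=> u w /connectP[[|v p] /= pp ew] wSP yw.
    by subst w; right.
  case/andP: pp => Euv _.
  case: (eqVneq u s) => [->|nus]; first by left.
  by right; have [? ? _] := Eout u v Euv nus.
have conn_fwd : forall p w, w \in SP -> y w = 1 -> path E w p ->
    last w p = t \/ (last w p \in SP /\ y (last w p) = 1).
  elim=> [|v p IH] w wSP yw /=; first by right.
  case/andP => Ewv pp.
  case: (eqVneq v t) => [evt|nvt].
    subst v; case: p pp {IH} => [|z p] /=; first by left.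
    by case/andP => Etz _; have := Et _ _ Etz; rewrite eqxx.
  have [vSP yv _] := Ein w v Ewv nvt.
  exact: IH.
have tos : forall w, w \in SP -> y w = 1 -> connect E s w.
  move=> w wSP yw.
  have [u [_ cuw np]] := maxpred predT w isT.
  case: (conn_active u w cuw wSP yw) => [<-//|[uSP yu]].
  by have [a Eau] := Epred u uSP yu; have := np a Eau.
have tot : forall w, w \in SP -> y w = 1 -> connect E w t.
  move=> w wSP yw.
  have [v [cwv mn]] := @exists_max_aux R N [pred v | connect E w v] (fun v => - H v) w
     (connect0 _ _).
  move: (cwv) => /connectP[p pp ev].
  case: (conn_fwd p w wSP yw pp) => [lt|[vSP yv]]; first by rewrite -lt -ev.
  rewrite -ev in vSP yv.
  have [z Evz] := Esucc v vSP yv.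
  have := mn z (connect_trans cwv (@connect1 N E v z Evz)).
  have := Hdec v z Evz; lra.
move=> i j [nis nit njs njt hK] V hsV hiV hjV.
have cutnn : forall e : N * N, [&& A e.1 e.2, e.1 \notin V & e.2 \in V] -> 0 <= x e.1 e.2.
  by move=> e /and3P[ab _ _]; apply: xnn.
have cut1 : forall a b, E a b -> a \notin V -> b \in V -> 1 <= in_cut A V x.
  move=> a b /andP[ab /eqP xab] aV bV.
  rewrite /in_cut (bigD1 (a, b)) /=; last by rewrite ab aV bV.
  rewrite xab lerDl; apply: sumr_ge0 => e /andP[+ _]; exact: cutnn.
have cut2 : forall a b a' b', E a b -> a \notin V -> b \in V ->
    E a' b' -> a' \notin V -> b' \in V -> (a, b) != (a', b') -> 1 + 1 <= in_cut A V x.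
  move=> a b a' b' /andP[ab /eqP xab] aV bV /andP[ab' /eqP xab'] aV' bV' ne.
  rewrite /in_cut (bigD1 (a, b)) /=; last by rewrite ab aV bV.
  rewrite (bigD1 (a', b')) /=; last by rewrite ab' aV' bV' eq_sym ne.
  rewrite xab xab' addrA lerDl; apply: sumr_ge0 => e /andP[/andP[+ _] _]; exact: cutnn.
have cutw : forall w, w \in V -> w \in SP -> y w = 1 ->
    exists a b, [/\ E a b, a \notin V, b \in V & connect E b w].
  move=> w wV wSP yw.
  have [u [uV cuw np]] := maxpred (mem V) w wV.
  case: (conn_active u w cuw wSP yw) => [eus|[uSP yu]].
    by exfalso; move: hsV; rewrite -eus => /negP; apply; exact: uV.
  have [a Eau] := Epred u uSP yu.
  by exists a, u; split => //; exact: np a Eau.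
have route : forall u1 u2, connect E s u1 -> connect E u1 u2 -> connect E u2 t ->
    exists p, [/\ is_path A s t p, u1 \in s :: p, u2 \in s :: p & plen d s p <= T].
  move=> u1 u2 /connectP[p1 pp1 e1] /connectP[p2 pp2 e2] /connectP[p3 pp3 e3].
  exists (p1 ++ p2 ++ p3).
  have pall : path E s (p1 ++ p2 ++ p3) by rewrite !cat_path -e1 -e2 pp1 pp2 pp3.
  have lst : last s (p1 ++ p2 ++ p3) = t by rewrite !last_cat -e1 -e2 -e3.
  have u1in : u1 \in s :: p1 ++ p2 ++ p3 by rewrite -cat_cons mem_cat e1 mem_last.
  split => //.
  - apply/and3P; split; last exact: uniqE.
    + by apply: (sub_path _ pall) => a b /andP[].
    + by rewrite lst.
  - have : u2 \in u1 :: p2 by rewrite e2 mem_last.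
    rewrite inE => /orP[/eqP->//|h].
    by rewrite inE !mem_cat h !orbT.
  - by have := plenle _ s pall lst hst; rewrite /H eqxx.
have iSP : i \in SP by move: (hN i); rewrite (negbTE nis) (negbTE nit) !orbF.
have jSP : j \in SP by move: (hN j); rewrite (negbTE njs) (negbTE njt) !orbF.
have cnn : 0 <= in_cut A V x by apply: sumr_ge0 => e; exact: cutnn.
case: (y01 i) => yi; case: (y01 j) => yj; rewrite yi yj.
- by rewrite addr0.
- have [a [b [Eab aV bV _]]] := cutw j hjV jSP yj.
  by rewrite add0r; exact: cut1 Eab aV bV.
- have [a [b [Eab aV bV _]]] := cutw i hiV iSP yi.
  by rewrite addr0; exact: cut1 Eab aV bV.
have [a [b [Eab aV bV cbi]]] := cutw i hiV iSP yi.
have [a' [b' [Eab' aV' bV' cbj]]] := cutw j hjV jSP yj.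
case: (eqVneq (a, b) (a', b')) => [[ea eb]|ne]; last exact: cut2 Eab aV bV Eab' aV' bV' ne.
subst a' b'; exfalso.
have nbs : b != s by apply/eqP => ebs; move: hsV; rewrite -ebs bV.
have : connect E i j || connect E j i.
  case/connectP: cbi => p pp ei; exact: (order p b i j nbs pp ei cbj).
case/orP => c.
  have [p [ip iin jin pl]] := route i j (tos i iSP yi) c (tot j jSP yj).
  have := hK p ip iin jin; lra.
have [p [ip jin iin pl]] := route j i (tos j jSP yj) c (tot i iSP yi).
have := hK p ip iin jin; lra.
Qed.
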